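(* Let $S$ be a set of places of $\mathbb{Q}$ and let $X$ be the set of places of $\overline{\mathbb{Q}}$ dividing a place in $S$. If $f\in LC_c(X)$, then there exists a number field $K$ such that $f$ is constant on $Y(K,v)$ for every $v\in M_K(S)$. Moreover, that constant value is $0$ for all but finitely many $v\in M_K(S)$.
   Context: Fix an algebraic closure $\overline{\mathbb{Q}}$ of $\mathbb{Q}$; number fields are finite extensions of $\mathbb{Q}$ inside $\overline{\mathbb{Q}}$. Let $Y$ be the set of all places of $\overline{\mathbb{Q}}$. For a number field $K$ and a place $v$ of $K$, put $Y(K,v)=\{y\in Y: y\mid v\}$. $Y$ carries the topology having $\{Y(K,v): [K:\mathbb{Q}]<\infty,\ v \text{ a place of } K\}$ as a basis (it is locally compact, totally disconnected and Hausdorff), and $X\subseteq Y$ carries the subspace topology. For a number field $K$, $M_K(S)$ denotes the set of places of $K$ dividing a place in $S$. $LC_c(X)$ denotes the set of locally constant functions $X\to\mathbb{R}$ with compact support. *)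

(* Defs.v *)
From HB Require Import structures.
From mathcomp Require Import all_boot all_order all_algebra.
From mathcomp Require Import algC.
From mathcomp Require Import boolp classical_sets cardinality reals exp.
Set Implicit Arguments. Unset Strict Implicit. Unset Printing Implicit Defensive.
Import Order.TTheory GRing.Theory Num.Theory.
Local Open Scope ring_scope.
Local Open Scope classical_set_scope.

(* Qbar is modelled by algC (algebraic closure of Q in C).  Subfields of
   algC are given as subsets K : set algC. *)

Section Places.
Variable R : realType.

Definition is_subfield (K : set algC) : Prop :=
  K 0 /\ K 1 /\ (forall x y, K x -> K y -> K (x - y)) /\
  (forall x y, K x -> K y -> K (x * y)) /\ (forall x, K x -> K x^-1).

Definition number_field (K : set algC) : Prop :=
  is_subfield K /\
  exists (n : nat) (b : 'I_n -> algC),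
    forall x, K x -> exists q : 'I_n -> rat, x = \sum_(i < n) ratr (q i) * b i.

Definition Qfield : set algC := [set x | exists q : rat, x = ratr q].

(* absolute value on the field K (only values on K matter) *)
Definition is_absval (K : set algC) (phi : algC -> R) : Prop :=
  (forall x, K x -> 0 <= phi x) /\
  (forall x, K x -> (phi x = 0 <-> x = 0)) /\
  (forall x y, K x -> K y -> phi (x * y) = phi x * phi y) /\
  (forall x y, K x -> K y -> phi (x + y) <= phi x + phi y).

Definition nontrivial_absval (K : set algC) (phi : algC -> R) : Prop :=
  exists x, K x /\ x <> 0 /\ phi x <> 1.

Definition equiv_absval (K : set algC) (phi psi : algC -> R) : Prop :=
  exists c : R, 0 < c /\ forall x, K x -> psi x = phi x `^ c.

Definition is_place (K : set algC) (v : set (algC -> R)) : Prop :=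
  exists phi, is_absval K phi /\ nontrivial_absval K phi /\
    v = [set psi | is_absval K psi /\ nontrivial_absval K psi /\
                   equiv_absval K phi psi].

(* w | v : some (equivalently every) absolute value in w restricts to
   an absolute value in v *)
Definition place_divides (w v : set (algC -> R)) : Prop :=
  exists phi, w phi /\ v phi.

Definition Yplaces : set (set (algC -> R)) := is_place setT.

Definition Ybasic (v : set (algC -> R)) : set (set (algC -> R)) :=
  [set y | Yplaces y /\ place_divides y v].

Definition Yopen (U : set (set (algC -> R))) : Prop :=
  U `<=` Yplaces /\
  forall y, U y -> exists K v, number_field K /\ is_place K v /\
     Ybasic v y /\ Ybasic v `<=` U.

Definition MK (K : set algC) (S : set (set (algC -> R))) : set (set (algC -> R)) :=
  [set v | is_place K v /\ exists s, S s /\ place_divides v s].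

Definition Xover (S : set (set (algC -> R))) : set (set (algC -> R)) :=
  [set y | Yplaces y /\ exists s, S s /\ place_divides y s].

Definition locally_constant (X : set (set (algC -> R)))
    (f : set (algC -> R) -> R) : Prop :=
  forall x, X x -> exists U, Yopen U /\ U x /\
    forall z, X z -> U z -> f z = f x.

(* support of f in X: closure in X of {x in X | f x <> 0} *)
Definition support (X : set (set (algC -> R))) (f : set (algC -> R) -> R)
    : set (set (algC -> R)) :=
  [set x | X x /\ forall U, Yopen U -> U x ->
     exists z, X z /\ U z /\ f z <> 0].

Definition compact_in (X C : set (set (algC -> R))) : Prop :=
  C `<=` X /\
  forall (I : Type) (U : I -> set (set (algC -> R))),
    (forall i, Yopen (U i)) -> C `<=` \bigcup_i (U i `&` X) ->
    exists F : set I, finite_set F /\ C `<=` \bigcup_(i in F) (U i `&` X).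

Definition LCc (X : set (set (algC -> R))) (f : set (algC -> R) -> R) : Prop :=
  locally_constant X f /\ compact_in X (support X f).

End Places.

(* Main.v *)
Require Import Defs.
From HB Require Import structures.
From mathcomp Require Import all_boot all_order all_algebra.
From mathcomp Require Import algC.
From mathcomp Require Import boolp classical_sets cardinality reals exp.
From mathcomp Require Import finmap vector falgebra fieldext algnum.
Import Order.TTheory GRing.Theory Num.Theory.
Local Open Scope ring_scope.
Local Open Scope classical_set_scope.
Set Implicit Arguments. Unset Strict Implicit.

Definition nonneg (R : realType) (K : set algC) (phi : algC -> R) :=
  forall x, K x -> 0 <= phi x.

Lemma eqv_refl (R : realType) K (phi : algC -> R) :
  nonneg K phi -> equiv_absval K phi phi.
Proof. move=> H; exists 1; split => // x Kx; rewrite powRr1 //; exact: H. Qed.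

Lemma eqv_sym (R : realType) K (phi psi : algC -> R) :
  nonneg K phi -> equiv_absval K phi psi -> equiv_absval K psi phi.
Proof.
move=> H [c [c0 Hc]]; exists c^-1; split; first by rewrite invr_gt0.
move=> x Kx; rewrite Hc // -powRrM mulfV ?gt_eqF // powRr1 //; exact: H.
Qed.

Lemma eqv_trans (R : realType) K (p q r : algC -> R) :
  equiv_absval K p q -> equiv_absval K q r -> equiv_absval K p r.
Proof.
move=> [c [c0 Hc]] [d [d0 Hd]]; exists (c * d); split; first exact: mulr_gt0.
by move=> x Kx; rewrite Hd // Hc // powRrM.
Qed.

Lemma eqv_sub (R : realType) K K' (p q : algC -> R) :
  K' `<=` K -> equiv_absval K p q -> equiv_absval K' p q.
Proof. by move=> sK [c [c0 Hc]]; exists c; split => // x /sK; apply: Hc. Qed.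

Lemma eqv_nontriv (R : realType) K (p q : algC -> R) :
  nonneg K p -> equiv_absval K p q -> nontrivial_absval K p ->
  nontrivial_absval K q.
Proof.
move=> Hp Hpq [x [Kx [x0 px]]]; exists x; split => //; split => // qx.
have Hq : nonneg K q.
  by case: Hpq => c [_ Hc] y Ky; rewrite Hc //; apply: powR_ge0.
have [c [_ Hc]] := eqv_sym Hp Hpq.
by apply: px; rewrite Hc // qx powR1.
Qed.

Definition cls (R : realType) (K : set algC) (phi : algC -> R) :=
  [set psi | is_absval K psi /\ nontrivial_absval K psi /\ equiv_absval K phi psi].

Lemma cls_eq (R : realType) K (p q : algC -> R) :
  nonneg K p -> nonneg K q -> equiv_absval K p q -> cls K p = cls K q.
Proof.
move=> Hp Hq Hpq; apply/seteqP; split => psi [H1 [H2 H3]]; split => //; split => //.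
  exact: eqv_trans (eqv_sym Hp Hpq) H3.
exact: eqv_trans Hpq H3.
Qed.

Lemma absval_nonneg (R : realType) K (p : algC -> R) : is_absval K p -> nonneg K p.
Proof. by case. Qed.

Lemma place_mem (R : realType) K v (phi : algC -> R) :
  is_place K v -> v phi -> v = cls K phi.
Proof.
move=> [p [Ap [Np ->]]] [A1 [N1 E1]]; apply: cls_eq => //; exact: absval_nonneg.
Qed.

Lemma place_props (R : realType) K v (phi : algC -> R) :
  is_place K v -> v phi -> is_absval K phi /\ nontrivial_absval K phi.
Proof. by move=> [p [Ap [Np ->]]] [A1 [N1 E1]]. Qed.

Lemma place_eqv (R : realType) K v (p q : algC -> R) :
  is_place K v -> v p -> v q -> equiv_absval K p q.
Proof. by move=> Hv vp; rewrite (place_mem Hv vp) => -[_ []]. Qed.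

Lemma absval_sub (R : realType) K K' (p : algC -> R) :
  K' `<=` K -> is_absval K p -> is_absval K' p.
Proof.
move=> sK [h1 [h2 [h3 h4]]]; split; [|split; [|split]].
- by move=> x /sK; apply: h1.
- by move=> x /sK; apply: h2.
- by move=> x y /sK Kx /sK Ky; apply: h3.
- by move=> x y /sK Kx /sK Ky; apply: h4.
Qed.

Lemma Y_absval (R : realType) y (phi : algC -> R) K :
  Yplaces y -> y phi -> is_absval K phi.
Proof.
move=> Hy yp; have [A _] := place_props Hy yp.
by apply: absval_sub A.
Qed.

Lemma place_unique (R : realType) K y v w :
  @Yplaces R y -> is_place K v -> is_place K w ->
  place_divides y v -> place_divides y w -> v = w.
Proof.
move=> Hy Hv Hw [p1 [y1 v1]] [p2 [y2 w2]].
have E : equiv_absval K p1 p2.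
  by apply: (eqv_sub (K := setT)) => //; apply: place_eqv Hy y1 y2.
rewrite (place_mem Hv v1) (place_mem Hw w2).
apply: cls_eq => //; apply: absval_nonneg; apply: Y_absval Hy _; eassumption.
Qed.

Lemma transfer (R : realType) K K' v v' (y0 y : set (algC -> R)) :
  K' `<=` K -> is_place K v -> is_place K' v' ->
  Ybasic v y0 -> Ybasic v' y0 -> Ybasic v y -> Ybasic v' y.
Proof.
move=> sK Hv Hv' [Hy0 [a [y0a va]]] [_ [a' [y0a' va']]] [Hy [b [yb vb]]].
split => //; exists b; split => //.
rewrite (place_mem Hv' va'); split; first exact: Y_absval Hy yb.
have Ea'a : equiv_absval K' a' a.
  by apply: (eqv_sub (K := setT)) => //; apply: place_eqv Hy0 y0a' y0a.
have Eab : equiv_absval K' a b by apply: eqv_sub sK _; apply: place_eqv Hv va vb.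
have E := eqv_trans Ea'a Eab.
have [A' N'] := place_props Hv' va'.
split => //; apply: eqv_nontriv E N' => //; exact: absval_nonneg.
Qed.

Lemma restrict (R : realType) K S (y : set (algC -> R)) :
  Qfield `<=` K -> (forall s, S s -> is_place Qfield s) -> Xover S y ->
  exists w, is_place K w /\ Ybasic w y.
Proof.
move=> sQ HS [Hy [s [Ss [phi [yphi sphi]]]]].
have [_ [x [Qx [x0 px]]]] := place_props (HS s Ss) sphi.
have A : is_absval K phi by apply: Y_absval Hy yphi.
have N : nontrivial_absval K phi by exists x; split => //; apply: sQ.
exists (cls K phi); split; first by exists phi.
split => //; exists phi; split => //; split => //; split => //.
by apply: eqv_refl; apply: absval_nonneg.
Qed.

Lemma Yopen_basic (R : realType) K (v : set (algC -> R)) :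
  number_field K -> is_place K v -> Yopen (Ybasic v).
Proof.
move=> nK Hv; split; first by move=> y; rewrite /Ybasic => -[].
by move=> y Hy; exists K, v; do ! split => //.
Qed.

Lemma Yopen_basic2 (R : realType) K (w : set (algC -> R)) :
  number_field K -> Yopen [set y | is_place K w /\ Ybasic w y].
Proof.
move=> nK; split; first by move=> y [_]; rewrite /Ybasic => -[].
move=> y [Hw Hy]; exists K, w; split => //; split => //; split => //.
Qed.

Definition closedQ (L : set algC) :=
  L 0 /\ (forall q, L (ratr q)) /\ (forall x y, L x -> L y -> L (x + y)) /\
  (forall x y, L x -> L y -> L (x * y)).

Lemma nf_in (K : set algC) n (b : 'I_n -> algC) :
  (forall x, K x -> exists q : 'I_n -> rat, x = \sum_(i < n) ratr (q i) * b i) ->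
  forall x, K x -> forall L, closedQ L -> (forall i, L (b i)) -> L x.
Proof.
move=> HK x Kx L [L0 [Lq [LD LM]]] Lb; have [q ->] := HK x Kx.
by apply: (big_ind L) => // i _; apply: LM.
Qed.

Lemma gen_seq (I : eqType) (Kf : I -> set algC) (r : seq I) :
  (forall i, i \in r -> number_field (Kf i)) ->
  exists s : seq algC, forall i, i \in r -> forall x, Kf i x ->
    forall L, closedQ L -> (forall z, z \in s -> L z) -> L x.
Proof.
elim: r => [|j r IH] H; first by exists [::].
have [s Hs] : exists s : seq algC, forall i, i \in r -> forall x, Kf i x ->
    forall L, closedQ L -> (forall z, z \in s -> L z) -> L x.
  by apply: IH => i ir; apply: H; rewrite inE ir orbT.
have [_ [n [b Hb]]] := H j (mem_head _ _).
exists ([seq b i | i <- enum 'I_n] ++ s) => i; rewrite inE => /orP[/eqP ->|ir].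
  move=> x Kx L cL Ls; apply: (nf_in Hb) => // k; apply: Ls.
  by rewrite mem_cat; apply/orP; left; apply: map_f; rewrite mem_enum.
move=> x Kx L cL Ls; apply: (Hs i ir x Kx L cL) => z zs; apply: Ls.
by rewrite mem_cat zs orbT.
Qed.

Lemma field_of_seq (s : seq algC) :
  exists K, number_field K /\ closedQ K /\ (forall z, z \in s -> K z).
Proof.
have [Qs [QsC [s1 Ds _]]] := num_field_exists s.
exists [set x | exists a, x = QsC a]; split; [split|split].
- split; first by exists 0; rewrite rmorph0.
  split; first by exists 1; rewrite rmorph1.
  split; first by move=> x y [a ->] [c ->]; exists (a - c); rewrite rmorphB.
  split; first by move=> x y [a ->] [c ->]; exists (a * c); rewrite rmorphM.
  by move=> x [a ->]; exists a^-1; rewrite fmorphV.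
- exists (\dim (fullv : {vspace Qs})).
  exists (fun i => QsC (vbasis (fullv : {vspace Qs}))`_i).
  move=> x [a ->]; exists (fun i => coord (vbasis fullv) i a).
  rewrite {1}(coord_vbasis (memvf a)) rmorph_sum; apply: eq_bigr => i _.
  by rewrite -mulr_algl rmorphM alg_num_field fmorph_rat.
- split; first by exists 0; rewrite rmorph0.
  split; first by move=> q; exists (ratr q); rewrite fmorph_rat.
  split; first by move=> x y [a ->] [c ->]; exists (a + c); rewrite rmorphD.
  by move=> x y [a ->] [c ->]; exists (a * c); rewrite rmorphM.
- by move=> z; rewrite -Ds => /mapP[a _ ->]; exists a.
Qed.

Unset Implicit Arguments. Set Strict Implicit.
Theorem proposition1p1 (R : realType) (S : set (set (algC -> R)))
  (HS : forall s, S s -> is_place Qfield s)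
  (f : set (algC -> R) -> R) (Hf : LCc (Xover S) f) :
  exists K : set algC, number_field K /\
    (forall v, MK K S v ->
       exists c : R, forall y, Ybasic v y -> Xover S y -> f y = c) /\
    finite_set [set v | MK K S v /\
       exists y, Ybasic v y /\ Xover S y /\ f y <> 0].
Proof.
case: Hf => Hlc [_ Hcomp].
pose X := Xover S.
pose I1 := {p : set algC * set (algC -> R) | number_field p.1 /\ is_place p.1 p.2 /\
  forall z z', X z -> X z' -> Ybasic p.2 z -> Ybasic p.2 z' -> f z = f z'}.
pose U1 (p : {classic I1}) := Ybasic (sval p).2.
have [F1 [finF1 cov1]] : exists F : set {classic I1}, finite_set F /\
    Defs.support X f `<=` \bigcup_(i in F) (U1 i `&` X).
  apply: (Hcomp {classic I1} U1).
    by move=> p; case: (svalP p) => nK [Hv _]; apply: Yopen_basic nK Hv.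
  move=> x [Xx _]; have [U [[_ oU] [Ux cU]]] := Hlc x Xx.
  have [K [v [nK [Hv [bx sU]]]]] := oU x Ux.
  have P : number_field (K, v).1 /\ is_place (K, v).1 (K, v).2 /\
    forall z z', X z -> X z' -> Ybasic (K, v).2 z -> Ybasic (K, v).2 z' -> f z = f z'.
    split => //; split => // z z' Xz Xz' bz bz'.
    by rewrite (cU z Xz (sU z bz)) (cU z' Xz' (sU z' bz')).
  by exists (exist _ (K, v) P) => //.
have [X1 eX1] := (@finite_fsetP {classic I1} F1).1 finF1.
have [s Hs] := @gen_seq {classic I1} (fun p => (sval p).1) X1
  (fun i _ => proj1 (svalP i)).
have [K [nK [cK sK]]] := field_of_seq s.
have subK : forall p : {classic I1}, F1 p -> (sval p).1 `<=` K.
  move=> p Fp x Kx; apply: (Hs p) => //; move: Fp; rewrite eX1 //.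
have QK : Qfield `<=` K by move=> x [q ->]; case: cK => _ [].
pose U2 (w : set (algC -> R)) := [set y | is_place K w /\ Ybasic w y].
have [F2 [finF2 cov2]] : exists F : set (set (algC -> R)), finite_set F /\
    Defs.support X f `<=` \bigcup_(i in F) (U2 i `&` X).
  apply: (Hcomp _ U2); first by move=> w; apply: Yopen_basic2.
  move=> x [Xx _]; have [w [Hw bw]] := restrict QK HS Xx.
  by exists w => //.
have supp : forall y, X y -> f y <> 0 -> Defs.support X f y.
  by move=> y Xy fy; split => // U _ Uy; exists y.
exists K; split => //; split.
  move=> v [Hv _].
  have [[y0 [by0 [Xy0 sy0]]]|no] :=
    pselect (exists y0, Ybasic v y0 /\ X y0 /\ Defs.support X f y0).
    have [p Fp [Up _]] := cov1 y0 sy0.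
    exists (f y0) => y by_ Xy.
    have [_ [_ cp]] := svalP p.
    have [_ [Hp _]] := svalP p.
    apply: cp => //; apply: (transfer (subK p Fp) Hv Hp by0 Up by_).
  exists 0 => y by_ Xy; case: (pselect (f y = 0)) => // fy; exfalso.
  by apply: no; exists y; split => //; split => //; apply: supp.
apply: (sub_finite_set _ finF2) => v [[Hv _] [y [by_ [Xy fy]]]].
have [w F2w [[Hw bw] _]] := cov2 y (supp y Xy fy).
suff -> : v = w by [].
apply: (place_unique (proj1 by_) Hv Hw); [exact: (proj2 by_)|exact: (proj2 bw)].
Qed.
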